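(* Let $S=\{R_0,R_1,\ldots,R_d\}$ be a quasi-thin scheme on $X$, let $\mathbb{F}$ be a field and $x\in X$, and let $\mathcal{T}=\mathcal{T}(x)$ be the Terwilliger $\mathbb{F}$-algebra of $S$ with respect to $x$. Then $$\dim_{\mathbb{F}}\mathcal{T}=(d+1)^2+\bigl|\{(a,b): R_a,R_b\in S,\ |R_{a'}R_b|=2\}\bigr|+\bigl|\{(c,e): R_c,R_e\in S,\ (c,e)\text{ is a bad pair of }S\}\bigr|.$$
   Context: Let $\mathbb{F}$ be a field of characteristic $p$ ($p=0$ or a prime) and $X$ a nonempty finite set. A scheme (association scheme) of class $d$ on $X$ is a partition $S=\{R_0,\dots,R_d\}$ of $X\times X$ into nonempty sets such that $R_0=\{(b,b):b\in X\}$; for each $c$ there is $c'$ with $R_{c'}=\{(f,e):(e,f)\in R_c\}$; and for all $i,j,k$ the intersection number $p_{ij}^k=|\{\ell\in X:(m,\ell)\in R_i,(\ell,n)\in R_j\}|$ does not depend on the choice of $(m,n)\in R_k$. The valency of $R_a$ is $k_a=p_{aa'}^0$. The complex product of $R_a,R_b$ is $R_aR_b=\{R_c\in S:p_{ab}^c>0\}$. $S$ is quasi-thin if $k_a\le 2$ for all $a$. For $y\in X$, $yR_a=\{z\in X:(y,z)\in R_a\}$. $M_X(\mathbb F)$ denotes the $\mathbb F$-matrices with rows and columns indexed by $X$; $E_{uv}$ is the matrix unit at $(u,v)$. $A_a$ is the $(0,1)$ adjacency matrix of $R_a$, and $E_a^*(y)=\sum_{i\in yR_a}E_{ii}$. The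 Terwilliger $\mathbb F$-algebra $\mathcal T(y)$ is the $\mathbb F$-subalgebra of $M_X(\mathbb F)$ generated by $A_0,\dots,A_d,E_0^*(y),\dots,E_d^*(y)$. Bad pair: for $R_u,R_v\in S$, $(u,v)$ is a bad pair of $S$ if there exist an integer $a\ge 1$ and $R_{i_b},R_{j_b},R_{\ell_b}\in S$ for $b=0,\dots,a$ such that $i_0=u$, $\ell_a=v$, $k_{i_b}=k_{\ell_b}=2$ and $p_{i_bj_b}^{\ell_b}=1$ for all $b\in\{0,\dots,a\}$, $\ell_c=i_{c+1}$ for all $c\in\{0,\dots,a-1\}$, and $|R_{u'}R_v|=1$. *)

(* Defs.v *)
From HB Require Import structures.
From mathcomp Require Import all_boot all_order all_algebra.
Set Implicit Arguments. Unset Strict Implicit. Unset Printing Implicit Defensive.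
Import GRing.Theory.

(* A "scheme" of class d on a finite set X is encoded by the map
   r : X -> X -> 'I_d.+1, with R_a = [set (x,y) | r x y == a]. *)
Section Scheme.
Variables (X : finType) (d : nat) (r : X -> X -> 'I_d.+1).

Definition is_scheme : Prop :=
  [/\
      (forall a : 'I_d.+1, exists x y, r x y = a),
      (forall x y, (r x y == ord0) = (x == y)),
      (forall c : 'I_d.+1, exists c' : 'I_d.+1, forall x y, r y x = c' <-> r x y = c) &
      (forall i j k : 'I_d.+1, exists p : nat, forall m n, r m n = k ->
          #|[set l | (r m l == i) && (r l n == j)]| = p)].

(* p_{ij}^k, computed at some pair (m,n) in R_k (well defined for schemes) *)
Definition pnum (i j k : 'I_d.+1) : nat :=
  match [pick mn : X * X | r mn.1 mn.2 == k] with
  | Some mn => #|[set l | (r mn.1 l == i) && (r l mn.2 == j)]|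
  | None => 0
  end.

(* the index c' of the transpose of R_c *)
Definition trI (c : 'I_d.+1) : 'I_d.+1 :=
  match [pick xy : X * X | r xy.1 xy.2 == c] with
  | Some xy => r xy.2 xy.1
  | None => c
  end.

Definition valency (a : 'I_d.+1) : nat := pnum a (trI a) ord0.

Definition quasi_thin : Prop := forall a, valency a <= 2.

(* complex product R_a R_b = {R_c | p_{ab}^c > 0} *)
Definition cprod (a b : 'I_d.+1) : {set 'I_d.+1} := [set c | 0 < pnum a b c].

Definition bad_pair (u v : 'I_d.+1) : Prop :=
  exists (a : nat) (i j l : nat -> 'I_d.+1),
    [/\ 1 <= a, i 0 = u /\ l a = v,
        (forall b, b <= a ->
           [/\ valency (i b) = 2, valency (l b) = 2 & pnum (i b) (j b) (l b) = 1]),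
        (forall c, c < a -> l c = i c.+1) &
        #|cprod (trI u) v| = 1].

(* matrices in M_X(F), rows/columns indexed by X via enum_rank *)
Variable F : fieldType.
Local Open Scope ring_scope.

Definition adjA (a : 'I_d.+1) : 'M[F]_#|X| :=
  \matrix_(i, j) ((r (enum_val i) (enum_val j) == a)%:R).

Definition dualE (y : X) (a : 'I_d.+1) : 'M[F]_#|X| :=
  \matrix_(i, j) (((i == j) && (r y (enum_val i) == a))%:R).

Definition is_subalgebra (W : {vspace 'M[F]_#|X|}) : Prop :=
  (1%:M \in W) /\ (forall u v, u \in W -> v \in W -> u *m v \in W).

Definition is_terwilliger_algebra (y : X) (U : {vspace 'M[F]_#|X|}) : Prop :=
  [/\ is_subalgebra U,
      (forall a, adjA a \in U),
      (forall a, dualE y a \in U) &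
      (forall W, is_subalgebra W -> (forall a, adjA a \in W) ->
         (forall a, dualE y a \in W) -> (U <= W)%VS)].

End Scheme.

(* Main.v *)
Require Import Defs.
From mathcomp Require Import all_boot all_order all_algebra.
From mathcomp Require Import zify.
Import GRing.Theory.
Set Implicit Arguments. Unset Strict Implicit. Unset Printing Implicit Defensive.

Section QT.
Variables (X : finType) (d : nat) (r : X -> X -> 'I_d.+1) (x : X).
Hypothesis Hs : is_scheme r.
Hypothesis Hq : quasi_thin r.

Lemma r0 y z : (r y z == ord0) = (y == z).
Proof. by case: Hs. Qed.

Lemma pconst i j k : exists p, forall m n, r m n = k ->
  #|[set l | (r m l == i) && (r l n == j)]| = p.
Proof. by case: Hs. Qed.

Lemma pconst2 i j k m n m' n' : r m n = k -> r m' n' = k ->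
  #|[set l | (r m l == i) && (r l n == j)]| = #|[set l | (r m' l == i) && (r l n' == j)]|.
Proof. by have [p Hp] := pconst i j k; move=> /Hp -> /Hp ->. Qed.

Lemma trI_spec c y z : r z y = trI r c <-> r y z = c.
Proof.
case: Hs => Hne _ Htr _.
have [c' Hc'] := Htr c.
suff -> : trI r c = c' by apply: Hc'.
rewrite /trI; case: pickP => [[m n] /= /eqP Hmn|H].
  by apply: (proj2 (Hc' m n)); rewrite Hmn.
by have [m [n Hmn]] := Hne c; have := H (m, n); rewrite /= Hmn eqxx.
Qed.

Lemma pnum_at i j k m n : r m n = k ->
  pnum r i j k = #|[set l | (r m l == i) && (r l n == j)]|.
Proof.
move=> Hmn; rewrite /pnum; case: pickP => [[m' n'] /= /eqP H|H].
  exact: (pconst2 i j H Hmn).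
by have := H (m, n); rewrite /= Hmn eqxx.
Qed.

Definition cell a := [set y | r x y == a].

Lemma in_cell a y : (y \in cell a) = (r x y == a).
Proof. by rewrite inE. Qed.

Lemma valencyE a : valency r a = #|cell a|.
Proof.
rewrite /valency (@pnum_at _ _ _ x x); last by apply/eqP; rewrite r0.
apply: eq_card => l; rewrite !inE.
case: eqP => [Hl|]; last by [].
by apply/eqP/trI_spec.
Qed.

Lemma cell_gt0 a : 0 < #|cell a|.
Proof.
case: Hs => Hne _ _ _.
have [y0 [z0 H0]] := Hne a.
have y00 : r y0 y0 = ord0 by apply/eqP; rewrite r0.
have xx0 : r x x = ord0 by apply/eqP; rewrite r0.
have := pconst2 a (trI r a) xx0 y00.
have -> : #|[set l | (r x l == a) && (r l x == trI r a)]| = #|cell a|.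
  apply: eq_card => l; rewrite !inE.
  case: eqP => [Hl|]; last by [].
  by apply/eqP/trI_spec.
move=> ->; apply/card_gt0P; exists z0; rewrite inE H0 eqxx /=.
by apply/eqP/trI_spec.
Qed.

Lemma cell_le2 a : #|cell a| <= 2.
Proof. by rewrite -valencyE; apply: Hq. Qed.

Lemma colcount a b c z z' : r x z = b -> r x z' = b ->
  #|[set y | (r x y == a) && (r y z == c)]| = #|[set y | (r x y == a) && (r y z' == c)]|.
Proof. exact: (pconst2 a c). Qed.

Lemma rowcount a b c y y' : r x y = a -> r x y' = a ->
  #|[set z | (r x z == b) && (r y z == c)]| = #|[set z | (r x z == b) && (r y' z == c)]|.
Proof.
move=> Hy Hy'.
have E w : #|[set z | (r x z == b) && (r w z == c)]| =
           #|[set l | (r x l == b) && (r l w == trI r c)]|.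
  apply: eq_card => l; rewrite !inE; congr (_ && _).
  apply/eqP/eqP => H; [by apply/trI_spec|by apply/trI_spec].
by rewrite !E; apply: (pconst2 b (trI r c) Hy Hy').
Qed.

Definition two a := #|cell a| == 2.

Lemma cell1_eq a y y' : ~~ two a -> r x y = a -> r x y' = a -> y = y'.
Proof.
move=> Ht Hy Hy'.
have H1 : #|cell a| == 1.
  by move: Ht (cell_gt0 a) (cell_le2 a); rewrite /two; lia.
case/cards1P: H1 => w Hw.
have : y \in cell a by rewrite in_cell Hy.
have : y' \in cell a by rewrite in_cell Hy'.
by rewrite Hw !inE => /eqP -> /eqP ->.
Qed.

Lemma cell2_cases a y y' u : two a -> r x y = a -> r x y' = a -> y != y' ->
  r x u = a -> u = y \/ u = y'.
Proof.
move=> Ht Hy Hy' Hne Hu.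
case: (eqVneq u y) => [->|Huy]; first by left.
case: (eqVneq u y') => [->|Huy']; first by right.
have : 0 < #|cell a :\ y :\ y'|.
  by apply/card_gt0P; exists u; rewrite !inE Huy Huy' Hu eqxx.
move: Ht; rewrite /two (cardsD1 y) (cardsD1 y' (cell a :\ y)) !inE Hy Hy' eqxx.
have Hne2 : (y' != y) by rewrite eq_sym. by rewrite Hne2 /=; lia.
Qed.

Lemma card_cell2 a y y' (P : pred X) : two a -> r x y = a -> r x y' = a -> y != y' ->
  #|[set u | (r x u == a) && P u]| = P y + P y'.
Proof.
move=> Ht Hy Hy' Hne.
have Hne2 : (y' != y) by rewrite eq_sym.
rewrite (cardsD1 y) (cardsD1 y') !inE Hy Hy' !eqxx /= Hne2 /=.
rewrite (_ : _ :\ y :\ y' = set0) ?cards0 ?addn0 //.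
apply/setP => u; rewrite !inE.
case: (eqVneq u y') => //= Huy'; case: (eqVneq u y) => //= Huy.
case: (eqVneq (r x u) a) => //= Hu.
by case: (cell2_cases Ht Hy Hy' Hne Hu) => H; [rewrite H eqxx in Huy|rewrite H eqxx in Huy'].
Qed.

Lemma card_cell1 a y (P : pred X) : ~~ two a -> r x y = a ->
  #|[set u | (r x u == a) && P u]| = P y.
Proof.
move=> Ht Hy.
rewrite (cardsD1 y) !inE Hy !eqxx /=.
rewrite (_ : _ :\ y = set0) ?cards0 ?addn0 //.
apply/setP => u; rewrite !inE.
case: (eqVneq u y) => //= Huy.
case: (eqVneq (r x u) a) => //= Hu.
by rewrite (cell1_eq Ht Hu Hy) eqxx in Huy.
Qed.

Definition fst a := odflt x [pick y | r x y == a].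

Lemma fstP a : r x (fst a) = a.
Proof.
rewrite /fst; case: pickP => [y /eqP //|H].
have /card_gt0P [y] := cell_gt0 a.
by rewrite in_cell H.
Qed.

Definition snd a := odflt x [pick y | (r x y == a) && (y != fst a)].

Lemma sndP a : two a -> r x (snd a) = a /\ snd a != fst a.
Proof.
move=> Ht; rewrite /snd; case: pickP => [y /andP [/eqP -> ->] //|H].
have : 0 < #|cell a :\ fst a|.
  by move: Ht; rewrite /two (cardsD1 (fst a)) in_cell fstP eqxx; lia.
case/card_gt0P => y; rewrite !inE.
by have := H y; rewrite /= andbC => ->.
Qed.

Lemma sndA a : two a -> r x (snd a) = a.
Proof. by case/sndP. Qed.

Lemma snd_neq a : two a -> snd a != fst a.
Proof. by case/sndP. Qed.

Lemma two_cases a u : two a -> r x u = a -> u = fst a \/ u = snd a.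
Proof.
move=> Ht Hu; apply: (cell2_cases Ht (fstP a) (sndA Ht) _ Hu).
by rewrite eq_sym snd_neq.
Qed.

Lemma two_eq a y y' : two a -> r x y = a -> r x y' = a ->
  (y == y') = ((y == fst a) == (y' == fst a)).
Proof.
move=> Ht Hy Hy'.
have Hs' := snd_neq Ht.
case: (two_cases Ht Hy) => ->; case: (two_cases Ht Hy') => ->;
  rewrite ?eqxx // (negbTE Hs') //.
by rewrite eq_sym (negbTE Hs').
Qed.

Definition E a b : bool := [exists y, [exists y', [exists z, [exists z',
  [&& r x y == a, r x y' == a, r x z == b, r x z' == b & r y z != r y' z']]]]].

Lemma EP a b y y' z z' : r x y = a -> r x y' = a -> r x z = b -> r x z' = b ->
  r y z != r y' z' -> E a b.
Proof.
move=> Hy Hy' Hz Hz' Hn; apply/existsP; exists y; apply/existsP; exists y'.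
apply/existsP; exists z; apply/existsP; exists z'.
by rewrite Hy Hy' Hz Hz' !eqxx Hn.
Qed.

Lemma notE a b y y' z z' : ~~ E a b -> r x y = a -> r x y' = a -> r x z = b -> r x z' = b ->
  r y z = r y' z'.
Proof.
move=> HE Hy Hy' Hz Hz'; apply/eqP; apply: contraNT HE => Hn.
exact: (EP Hy Hy' Hz Hz' Hn).
Qed.

Lemma const_one a b y y' z z' : (~~ two a || ~~ two b) ->
  r x y = a -> r x y' = a -> r x z = b -> r x z' = b -> r y z = r y' z'.
Proof.
move=> Ht Hy Hy' Hz Hz'.
case/orP: Ht => Ht.
  rewrite -(cell1_eq Ht Hy Hy').
  have := colcount a (r y z) Hz Hz'.
  rewrite !(card_cell1 _ Ht Hy) eqxx.
  by case: eqP.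
case: (boolP (two a)) => Ha.
  rewrite -(cell1_eq Ht Hz Hz').
  have := rowcount b (r y z) Hy Hy'.
  rewrite !(card_cell1 _ Ht Hz) eqxx.
  by case: eqP.
rewrite -(cell1_eq Ha Hy Hy') -(cell1_eq Ht Hz Hz').
done.
Qed.

Lemma circ a b y y' z z' : two a -> two b -> r x y = a -> r x y' = a -> y != y' ->
  r x z = b -> r x z' = b -> z != z' -> r y z = r y' z'.
Proof.
move=> Ha Hb Hy Hy' Hne Hz Hz' Hnz.
set v := r y z.
have C := colcount a v Hz Hz'.
have R := rowcount b v Hy Hy'.
rewrite !(card_cell2 _ Ha Hy Hy' Hne) in C.
rewrite !(card_cell2 _ Hb Hz Hz' Hnz) in R.
move: C R; rewrite /= eqxx.
case: (r y' z == v); case: (r y z' == v); case: (eqVneq (r y' z') v) => //= _; lia.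
Qed.

Lemma E_two a b : E a b -> two a && two b.
Proof.
case/existsP => y /existsP [y'] /existsP [z] /existsP [z'] /and5P [/eqP Hy /eqP Hy' /eqP Hz /eqP Hz' Hn].
apply/negPn/negP; rewrite negb_and => Ht.
by rewrite (const_one Ht Hy Hy' Hz Hz') eqxx in Hn.
Qed.

Lemma E_sym a b : E a b -> E b a.
Proof.
case/existsP => y /existsP [y'] /existsP [z] /existsP [z'] /and5P [/eqP Hy /eqP Hy' /eqP Hz /eqP Hz' Hn].
apply: (EP Hz Hz' Hy Hy'); apply: contra Hn => /eqP H.
apply/eqP; apply: (proj1 (trI_spec (r y' z') y z)).
by rewrite H; apply: (proj2 (trI_spec (r y' z') y' z')).
Qed.

Lemma E_fst a b : E a b -> r (fst a) (fst b) != r (fst a) (snd b).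
Proof.
move=> HE; have /andP [Ha Hb] := E_two HE.
apply: contraL HE => /eqP H.
apply/negP => /existsP [y /existsP [y' /existsP [z /existsP [z' /and5P [/eqP Hy /eqP Hy' /eqP Hz /eqP Hz' Hn]]]]].
have K u w : r x u = a -> r x w = b -> r u w = r (fst a) (fst b).
  move=> Hu Hw.
  case: (two_cases Ha Hu) => ->; case: (two_cases Hb Hw) => ->.
  - by [].
  - by rewrite H.
  - rewrite (circ Ha Hb (sndA Ha) (fstP a) (snd_neq Ha) (fstP b) (sndA Hb)) ?H //.
    by rewrite eq_sym snd_neq.
  - apply: (circ Ha Hb (sndA Ha) (fstP a) (snd_neq Ha) (sndA Hb) (fstP b) (snd_neq Hb)).
by rewrite (K _ _ Hy Hz) (K _ _ Hy' Hz') eqxx in Hn.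
Qed.

Lemma Eaa a : two a -> E a a.
Proof.
move=> Ha; apply: (EP (fstP a) (sndA Ha) (fstP a) (fstP a)).
rewrite (_ : r (fst a) (fst a) = ord0); last by apply/eqP; rewrite r0.
by rewrite eq_sym r0 snd_neq.
Qed.

Definition sim a b := two a && connect E a b.

Lemma connect_two a b : connect E a b -> two a -> two b.
Proof.
move=> Hc Ha.
have Hcl : closed E [pred c | two c].
  by move=> u v /E_two /andP [Hu Hv]; rewrite !inE Hu Hv.
by have := closed_connect Hcl Hc; rewrite !inE Ha => <-.
Qed.

Lemma E_symm : symmetric E.
Proof. by move=> a b; apply/idP/idP => /E_sym. Qed.

Lemma sim_two a b : sim a b -> two a && two b.
Proof. by case/andP => Ha Hc; rewrite Ha (connect_two Hc Ha). Qed.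

Lemma sim_sym a b : sim a b -> sim b a.
Proof.
move=> H; have /andP [Ha Hb] := sim_two H.
case/andP: H => _ Hc; rewrite /sim Hb /=.
by rewrite (sym_connect_sym E_symm).
Qed.

Lemma sim_trans a b c : sim a b -> sim b c -> sim a c.
Proof.
case/andP => Ha H1 /andP [_ H2]; rewrite /sim Ha /=.
exact: connect_trans H1 H2.
Qed.

Lemma sim_refl a : two a -> sim a a.
Proof. by move=> Ha; rewrite /sim Ha connect0. Qed.

Lemma E_sim a b : E a b -> sim a b.
Proof. by move=> HE; have /andP [Ha _] := E_two HE; rewrite /sim Ha connect1. Qed.

Definition par y z := (y == fst (r x y)) (+) (z == fst (r x z)).
Definition kap y z := (r x y, r x z, sim (r x y) (r x z) && par y z).

Lemma circ_fs a b : two a -> two b ->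
  r (fst a) (fst b) = r (snd a) (snd b) /\ r (fst a) (snd b) = r (snd a) (fst b).
Proof.
move=> Ha Hb; split.
  apply: (circ Ha Hb (fstP a) (sndA Ha) _ (fstP b) (sndA Hb)); by rewrite eq_sym snd_neq.
apply: (circ Ha Hb (fstP a) (sndA Ha) _ (sndA Hb) (fstP b)); [by rewrite eq_sym snd_neq|].
exact: snd_neq.
Qed.

Lemma kap_r y z y' z' : kap y z = kap y' z' -> r y z = r y' z'.
Proof.
case=> Ha Hb Hp.
case: (boolP (E (r x y) (r x z))) => HE; last first.
  by apply: (notE HE) => //; rewrite ?Ha ?Hb.
have Hsim := E_sim HE; have /andP [Ht1 Ht2] := E_two HE.
rewrite -Ha -Hb Hsim /= in Hp.
move: Hp; rewrite /par -Ha -Hb.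
move: Ht1 Ht2 Ha Hb; set a := r x y; set b := r x z => Ht1 Ht2 Ha Hb.
have Hy : r x y = a by [].
have Hz : r x z = b by [].
have [C1 C2] := circ_fs Ht1 Ht2.
have N1 := snd_neq Ht1; have N2 := snd_neq Ht2.
case: (two_cases Ht1 Hy) => ->; case: (two_cases Ht1 (esym Ha)) => ->;
case: (two_cases Ht2 Hz) => ->; case: (two_cases Ht2 (esym Hb)) => ->;
rewrite ?eqxx ?(negbTE N1) ?(negbTE N2) //=.
Qed.

Lemma kap_eq y z y' z' : kap y z = kap y' z' -> (y == z) = (y' == z').
Proof.
case=> Ha Hb Hp.
case: (eqVneq (r x y) (r x z)) => Hab; last first.
  have -> : y == z = false by apply/negbTE; apply: contraNneq Hab => ->.
  have -> : y' == z' = false by apply/negbTE; rewrite Ha Hb in Hab; apply: contraNneq Hab => ->.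
  by [].
case: (boolP (two (r x y))) => Ht; last first.
  have e1 : y = z := cell1_eq Ht (erefl _) (esym Hab).
  have e2 : y' = z' := cell1_eq Ht (esym Ha) (etrans (esym Hb) (esym Hab)).
  by rewrite e1 e2 !eqxx.
have Hs2 := sim_refl Ht.
rewrite -Ha -Hb -Hab Hs2 /= in Hp.
move: Hp; rewrite /par -Ha -Hb -Hab.
rewrite (two_eq Ht (erefl _) (esym Hab)).
rewrite (two_eq Ht (esym Ha) (etrans (esym Hb) (esym Hab))).
by case: (y == _); case: (z == _); case: (y' == _); case: (z' == _).
Qed.

Variable F : fieldType.
Local Open Scope ring_scope.

Definition ccf (f : X -> X -> F) := forall y z y' z', kap y z = kap y' z' -> f y z = f y' z'.

Definition swap w := if w == fst (r x w) then snd (r x w) else fst (r x w).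

Lemma swap_r w : two (r x w) -> r x (swap w) = r x w.
Proof. by move=> Ht; rewrite /swap; case: ifP => _; rewrite ?sndA ?fstP. Qed.

Lemma swap_fst w : two (r x w) -> (swap w == fst (r x w)) = ~~ (w == fst (r x w)).
Proof.
move=> Ht; rewrite /swap; case: ifP => _.
  by rewrite (negbTE (snd_neq Ht)).
by rewrite eqxx.
Qed.

Lemma swapK w : two (r x w) -> swap (swap w) = w.
Proof.
move=> Ht; have Hr := swap_r Ht.
rewrite {1}/swap Hr swap_fst //.
case: (two_cases Ht (erefl _)) => Hw.
  rewrite {1}Hw eqxx /=; exact: esym Hw.
have Hn : (w == fst (r x w)) = false by rewrite {1}Hw (negbTE (snd_neq Ht)).
by rewrite Hn /=; exact: esym Hw.
Qed.

Lemma ccf_mul f g : ccf f -> ccf g -> ccf (fun y z => \sum_w f y w * g w z).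
Proof.
move=> Hf Hg y z y' z' Hk.
have [Ha Hb Hp] := Hk.
rewrite -Ha -Hb in Hp.
set a := r x y in Ha Hp *; set b := r x z in Hb Hp *.
set dy := (y == fst a) (+) (y' == fst a).
set dz := (z == fst b) (+) (z' == fst b).
have Hd : sim a b -> dy = dz.
  move=> Hab; move: Hp; rewrite Hab /= /par -Ha -Hb /dy /dz.
  by case: (y == _); case: (y' == _); case: (z == _); case: (z' == _).
pose C c := (sim c a && dy) || (sim c b && dz).
pose phi w := if C (r x w) then swap w else w.
have HC c : C c -> two c.
  by case/orP => /andP [/sim_two /andP [Ht _] _].
have Hphir w : r x (phi w) = r x w.
  rewrite /phi; case: (boolP (C (r x w))) => // /HC; exact: swap_r.
have Hphii : involutive phi.
  move=> w; rewrite {1}/phi Hphir /phi.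
  case: (boolP (C (r x w))) => // /HC; exact: swapK.
have Hphi1 w : sim a (r x w) -> phi w = if dy then swap w else w.
  move=> Haw; have Hwa := sim_sym Haw; rewrite /phi /C Hwa /=.
  case: (boolP (sim (r x w) b)) => Hwb /=; last by rewrite orbF.
  by rewrite -(Hd (sim_trans Haw Hwb)) orbb.
have Hphi2 w : sim (r x w) b -> phi w = if dz then swap w else w.
  move=> Hwb; rewrite /phi /C Hwb /=.
  case: (boolP (sim (r x w) a)) => Hwa /=; last by [].
  by rewrite -(Hd (sim_trans (sim_sym Hwa) Hwb)) orbb.
rewrite (reindex_inj (inv_inj Hphii)) /=.
apply: eq_bigr => w _; congr (_ * _).
  apply: Hf; rewrite /kap Hphir -Ha; congr (_, _, _).
  case: (boolP (sim a (r x w))) => //= Haw.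
  have /andP [_ Ht] := sim_two Haw.
  rewrite /par -Ha Hphir (Hphi1 _ Haw) /dy.
  case: (y == fst a); case: (y' == fst a) => //=;
  rewrite ?swap_fst //; by case: (w == _).
apply: Hg; rewrite /kap Hphir -Hb; congr (_, _, _).
case: (boolP (sim (r x w) b)) => //= Hwb.
have /andP [Ht _] := sim_two Hwb.
rewrite /par -Hb Hphir (Hphi2 _ Hwb) /dz.
case: (z == fst b); case: (z' == fst b) => //=;
rewrite ?swap_fst //; by case: (w == _).
Qed.

Definition mx (f : X -> X -> F) : 'M[F]_#|X| := \matrix_(i, j) f (enum_val i) (enum_val j).

Lemma mxK f y z : mx f (enum_rank y) (enum_rank z) = f y z.
Proof. by rewrite mxE !enum_rankK. Qed.

Lemma mx_eta (M : 'M[F]_#|X|) : M = mx (fun y z => M (enum_rank y) (enum_rank z)).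
Proof. by apply/matrixP => i j; rewrite mxE !enum_valK. Qed.

Lemma mxP f g : (forall y z, f y z = g y z) -> mx f = mx g.
Proof. by move=> H; apply/matrixP => i j; rewrite !mxE H. Qed.

Lemma sum_X (h : 'I_#|X| -> F) : \sum_k h k = \sum_w h (enum_rank w).
Proof.
rewrite (reindex (@enum_rank X)) //=.
by apply: onW_bij; exists enum_val; [exact: enum_rankK|exact: enum_valK].
Qed.

Lemma mx_mul f g : mx f *m mx g = mx (fun y z => \sum_w f y w * g w z).
Proof.
apply/matrixP => i j; rewrite !mxE sum_X.
by apply: eq_bigr => w _; rewrite !mxE enum_rankK.
Qed.

Lemma mx_sum (I : finType) (f : I -> X -> X -> F) :
  \sum_k mx (f k) = mx (fun y z => \sum_k f k y z).
Proof. by apply/matrixP => i j; rewrite summxE !mxE; apply: eq_bigr => k _; rewrite mxE. Qed.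

Definition ccM (M : 'M[F]_#|X|) := ccf (fun y z => M (enum_rank y) (enum_rank z)).

Lemma ccM_mx f : ccf f -> ccM (mx f).
Proof. by move=> H y z y' z' Hk; rewrite !mxK; apply: H. Qed.

Lemma ccM_mul M N : ccM M -> ccM N -> ccM (M *m N).
Proof.
move=> HM HN; rewrite (mx_eta M) (mx_eta N) mx_mul.
by apply: ccM_mx; apply: ccf_mul.
Qed.

Lemma ccM_lin (n : nat) (c : 'I_n -> F) (v : 'I_n -> 'M[F]_#|X|) :
  (forall k, ccM (v k)) -> ccM (\sum_k c k *: v k).
Proof.
move=> H y z y' z' Hk; rewrite !summxE; apply: eq_bigr => k _.
by rewrite !mxE (H k _ _ _ _ Hk).
Qed.

Definition adjf a := fun y z => ((r y z == a)%:R : F).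
Definition dualf a := fun y z => (((y == z) && (r x y == a))%:R : F).

Lemma adjA_mx a : @adjA X d r F a = mx (adjf a).
Proof. by []. Qed.

Lemma dualE_mx a : @dualE X d r F x a = mx (dualf a).
Proof.
apply/matrixP => i j; rewrite !mxE /dualf.
by rewrite (inj_eq (@enum_val_inj _ _)).
Qed.

Lemma mx_dualL f a : mx (dualf a) *m mx f = mx (fun y z => (r x y == a)%:R * f y z).
Proof.
rewrite mx_mul; apply: mxP => y z.
rewrite (bigD1 y) //= big1 ?addr0 /dualf ?eqxx //.
by move=> w /negbTE Hw; rewrite eq_sym Hw mul0r.
Qed.

Lemma mx_dualR f b : mx f *m mx (dualf b) = mx (fun y z => f y z * (r x z == b)%:R).
Proof.
rewrite mx_mul; apply: mxP => y z.
rewrite (bigD1 z) //= big1 ?addr0 /dualf ?eqxx //.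
by move=> w /negbTE Hw; rewrite Hw mulr0.
Qed.

Lemma sum_ind (B : pred X) : \sum_w ((B w)%:R : F) = (#|[set w | B w]|)%:R.
Proof.
rewrite -sum1_card natr_sum.
rewrite [RHS]big_mkcond /=; apply: eq_bigr => w _; rewrite inE; by case: (B w).
Qed.

Definition Idx := ('I_d.+1 * 'I_d.+1 * bool)%type.
Definition Pp : pred Idx := fun i => ~~ i.2 || sim i.1.1 i.1.2.
Definition Gm (i : Idx) := mx (fun y z => ((kap y z == i))%:R).
Definition sq := [seq Gm i | i <- enum Pp].
Definition rep (i : Idx) := (fst i.1.1, if i.2 then snd i.1.2 else fst i.1.2).

Lemma kap_rep i : Pp i -> kap (rep i).1 (rep i).2 = i.
Proof.
case: i => [[a b] t] /=; rewrite /Pp /= => HP.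
rewrite /kap /rep /= fstP /par fstP eqxx /=.
case: t HP => /= [Hab|_].
  have /andP [_ Hb] := sim_two Hab.
  by rewrite sndA // Hab (negbTE (snd_neq Hb)).
by rewrite fstP eqxx andbF.
Qed.

Lemma kap_P y z : Pp (kap y z).
Proof. by rewrite /Pp /kap /=; case: sim; rewrite ?orbT ?andbF. Qed.

Lemma Gm_cc i : ccM (Gm i).
Proof. by apply: ccM_mx => y z y' z' ->. Qed.

Lemma cc_span M : ccM M -> M \in <<sq>>%VS.
Proof.
move=> HM.
have -> : M = \sum_(i | Pp i) M (enum_rank (rep i).1) (enum_rank (rep i).2) *: Gm i.
  rewrite {1}(mx_eta M); apply/matrixP => p q.
  rewrite summxE !mxE.
  set y := enum_val p; set z := enum_val q.
  rewrite (bigD1 (kap y z)) ?kap_P //= big1 ?addr0.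
    rewrite !mxE eqxx mulr1.
    by apply: HM; symmetry; exact: (kap_rep (kap_P y z)).
  by move=> i /andP [_ Hi]; rewrite !mxE eq_sym (negbTE Hi) mulr0.
apply: memv_suml => i Hi; apply: memvZ; apply: memv_span.
by apply: map_f; rewrite mem_enum.
Qed.

Lemma span_cc M : M \in <<sq>>%VS -> ccM M.
Proof.
move=> HM; rewrite (coord_span (X := in_tuple sq) HM).
apply: ccM_lin => k.
have Hk : (k < size sq)%N by [].
have : (in_tuple sq)`_k \in sq by apply: mem_nth.
by case/mapP => i _ ->; apply: Gm_cc.
Qed.

Definition i0 : Idx := (ord0, ord0, false).

Lemma sq_free : free sq.
Proof.
apply/freeP => c Hc k.
set e := enum Pp.
have Hk : (k < size e)%N by rewrite /e -cardE.
set i := nth i0 e k.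
have Hi : Pp i by have := mem_nth i0 Hk; rewrite mem_enum.
have := congr1 (fun M : 'M[F]_#|X| => M (enum_rank (rep i).1) (enum_rank (rep i).2)) Hc.
rewrite /= summxE mxE.
rewrite (bigD1 k) //= big1 ?addr0.
  rewrite mxE (nth_map i0) // mxK kap_rep // eqxx mulr1 => ->; by [].
move=> m Hm.
have Hm2 : (m < size e)%N by rewrite /e -cardE.
rewrite mxE (nth_map i0) //.
rewrite mxK kap_rep // nth_uniq ?enum_uniq //.
have -> : (k == m :> nat) = false by apply/negbTE; rewrite eq_sym; exact: Hm.
by rewrite mulr0.
Qed.

Lemma dim_sq : \dim <<sq>> = #|Pp|.
Proof. by have /eqP -> := sq_free; rewrite size_map cardE. Qed.

Lemma sq_subalg : is_subalgebra <<sq>>%VS.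
Proof.
split.
  apply: cc_span => y z y' z' Hk; rewrite !mxE !(inj_eq (@enum_rank_inj _)).
  by rewrite (kap_eq Hk).
move=> u v Hu Hv; apply: cc_span; apply: ccM_mul; exact: span_cc.
Qed.

Lemma adjA_in a : @adjA X d r F a \in <<sq>>%VS.
Proof.
apply: cc_span; rewrite adjA_mx; apply: ccM_mx => y z y' z' Hk.
by rewrite /adjf (kap_r Hk).
Qed.

Lemma dualE_in a : @dualE X d r F x a \in <<sq>>%VS.
Proof.
apply: cc_span; rewrite dualE_mx; apply: ccM_mx => y z y' z' Hk.
by rewrite /dualf (kap_eq Hk); case: Hk => -> _ _.
Qed.

Lemma kap_ff a b : kap (fst a) (fst b) = (a, b, false).
Proof. by rewrite /kap /par !fstP !eqxx andbF. Qed.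

Lemma kap_fs a b : two b -> kap (fst a) (snd b) = (a, b, sim a b).
Proof.
by move=> Hb; rewrite /kap /par fstP sndA // eqxx (negbTE (snd_neq Hb)) andbT.
Qed.

Lemma kap_sf a b : two a -> kap (snd a) (fst b) = (a, b, sim a b).
Proof.
by move=> Ha; rewrite /kap /par fstP sndA // eqxx (negbTE (snd_neq Ha)) andbT.
Qed.

Lemma kap_ss a b : two a -> two b -> kap (snd a) (snd b) = (a, b, false).
Proof.
by move=> Ha Hb; rewrite /kap /par !sndA // (negbTE (snd_neq Ha)) (negbTE (snd_neq Hb)) andbF.
Qed.

Definition Jm a b := mx (fun y z => ((r x y == a) && (r x z == b))%:R).

Lemma J_split a b : Jm a b = Gm (a, b, false) + Gm (a, b, true).
Proof.
apply/matrixP => i j; rewrite !mxE /kap !xpair_eqE.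
case: (r x _ == a); case: (r x _ == b) => //=; rewrite ?addr0 //.
by case: (_ && _); rewrite ?addr0 ?add0r.
Qed.

Lemma Gm_nsim a b : ~~ sim a b -> Gm (a, b, false) = Jm a b.
Proof.
move=> H; apply/mxP => y z; rewrite /kap !xpair_eqE.
case: (eqVneq (r x y) a) => [->|] //=; case: (eqVneq (r x z) b) => [->|] //=.
by rewrite (negbTE H).
Qed.

Lemma Gm_base a : two a -> Gm (a, a, false) = @dualE X d r F x a.
Proof.
move=> Ha; rewrite dualE_mx; apply/mxP => y z; rewrite /kap /dualf !xpair_eqE.
case: (eqVneq (r x y) a) => Hy; last by rewrite andbF.
case: (eqVneq (r x z) a) => Hz; last first.
  have -> : (y == z) = false by apply/negbTE; apply: contraNneq Hz => Hyz; rewrite -Hyz Hy.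
  by [].
rewrite /= Hy Hz sim_refl //= /par Hy Hz (two_eq Ha Hy Hz) andbT.
by case: (y == _); case: (z == _).
Qed.

Lemma Gm_step a b c : sim a c -> E c b ->
  Gm (a, b, false) = Gm (a, c, false) *m
    (@dualE X d r F x c *m @adjA X d r F (r (fst c) (fst b)) *m @dualE X d r F x b).
Proof.
move=> Hac Hcb.
have /andP [Ha Hc] := sim_two Hac.
have /andP [_ Hb] := E_two Hcb.
have Hcb' := E_sim Hcb.
have Hab := sim_trans Hac Hcb'.
have [C1 C2] := circ_fs Hc Hb.
have N := E_fst Hcb.
rewrite !dualE_mx adjA_mx mx_dualL mx_dualR /Gm mx_mul; apply: mxP => y z.
set v := r (fst c) (fst b).
pose B w := [&& kap y w == (a, c, false), r x w == c, r w z == v & r x z == b].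
have -> : \sum_w (kap y w == (a, c, false))%:R * ((r x w == c)%:R * adjf v w z * (r x z == b)%:R)
    = \sum_w ((B w)%:R : F).
  apply: eq_bigr => w _; rewrite /adjf /B -!natrM !mulnb.
  by case: (_ == _); case: (_ == _); case: (_ == _); case: (_ == _).
rewrite sum_ind.
have -> : [set w | B w] = [set w | (r x w == c) && B w].
  by apply/setP => w; rewrite !inE /B; case: (r x w == c); rewrite ?andbF.
rewrite (card_cell2 _ Hc (fstP c) (sndA Hc)); last by rewrite eq_sym snd_neq.
case: (boolP ((r x y == a) && (r x z == b))) => Hyz; last first.
  rewrite /B /kap !xpair_eqE.
  case: (eqVneq (r x y) a) Hyz => [_|] /=; last by [].
  by move/negbTE => Hz; rewrite Hz !andbF.
case/andP: Hyz => /eqP Hy /eqP Hz.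
have N1 := snd_neq Ha; have N2 := snd_neq Hb; have N3 := snd_neq Hc.
rewrite /B.
case: (two_cases Ha Hy) => ->; case: (two_cases Hb Hz) => ->;
rewrite ?kap_ff ?kap_fs ?kap_sf ?kap_ss // ?fstP ?sndA // ?Hab ?Hac //= ?eqxx ?Hac //=;
rewrite /v -?C1 -?C2 ?eqxx ?(negbTE N) //;
have N' : (r (fst c) (snd b) == r (fst c) (fst b)) = false by rewrite eq_sym (negbTE N).
all: by rewrite ?N' !xpair_eqE !eqxx /= ?N' ?andbF ?andbT.
Qed.

Lemma cprodE a b c : (c \in cprod r (trI r a) b) =
  [exists y, [exists z, [&& r x y == a, r x z == b & r y z == c]]].
Proof.
rewrite inE; apply/idP/idP.
  rewrite /pnum; case: pickP => [[m n] /= /eqP Hmn|]; last by [].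
  case/card_gt0P => l; rewrite inE => /andP [/eqP Hml /eqP Hln].
  have Hlm : r l m = a by apply/(proj1 (trI_spec a l m)).
  have H := pconst2 a c Hln (fstP b).
  have : (0 < #|[set l0 | (r x l0 == a) && (r l0 (fst b) == c)]|)%N.
    by rewrite -H; apply/card_gt0P; exists m; rewrite inE Hlm Hmn !eqxx.
  case/card_gt0P => y; rewrite inE => /andP [Hy Hyz].
  apply/existsP; exists y; apply/existsP; exists (fst b).
  by rewrite Hy Hyz fstP eqxx.
case/existsP => y /existsP [z /and3P [/eqP Hy /eqP Hz /eqP Hyz]].
rewrite (pnum_at _ _ Hyz); apply/card_gt0P; exists x; rewrite inE Hz eqxx andbT.
by apply/eqP/(proj2 (trI_spec a x y)).
Qed.

Lemma block_vals a b y z : r x y = a -> r x z = b ->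
  r y z = r (fst a) (fst b) \/ r y z = r (fst a) (snd b).
Proof.
move=> Hy Hz.
case: (boolP (E a b)) => HE; last by left; apply: (notE HE) => //; rewrite fstP.
have /andP [Ha Hb] := E_two HE.
have [C1 C2] := circ_fs Ha Hb.
case: (two_cases Ha Hy) => ->; case: (two_cases Hb Hz) => ->; rewrite -?C1 -?C2; by [left|right].
Qed.

Lemma cprod_card a b : #|cprod r (trI r a) b| = (E a b).+1.
Proof.
case: (boolP (E a b)) => HE.
  have /andP [Ha Hb] := E_two HE.
  rewrite (_ : cprod _ _ _ = [set r (fst a) (fst b); r (fst a) (snd b)]) ?cards2 ?(E_fst HE) //.
  apply/setP => c; rewrite cprodE !inE; apply/idP/idP.
    case/existsP => y /existsP [z /and3P [/eqP Hy /eqP Hz /eqP <-]].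
    by case: (block_vals Hy Hz) => ->; rewrite eqxx ?orbT.
  case/orP => /eqP ->; apply/existsP; exists (fst a); apply/existsP.
    by exists (fst b); rewrite !fstP !eqxx.
  by exists (snd b); rewrite fstP sndA // !eqxx.
rewrite (_ : cprod _ _ _ = [set r (fst a) (fst b)]) ?cards1 //.
apply/setP => c; rewrite cprodE !inE; apply/idP/idP.
  case/existsP => y /existsP [z /and3P [/eqP Hy /eqP Hz /eqP <-]].
  by rewrite (notE HE Hy (fstP a) Hz (fstP b)).
move/eqP => ->; apply/existsP; exists (fst a); apply/existsP.
by exists (fst b); rewrite !fstP !eqxx.
Qed.

Lemma pnum_fst i j l : pnum r i j l = #|[set y | (r x y == i) && (r y (fst l) == j)]|.
Proof. exact: pnum_at (fstP l). Qed.

Lemma E_pnum i l : E i l -> pnum r i (r (fst i) (fst l)) l = 1%N.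
Proof.
move=> HE; have /andP [Hi Hl] := E_two HE.
have [C1 C2] := circ_fs Hi Hl.
rewrite pnum_fst (card_cell2 _ Hi (fstP i) (sndA Hi)); last by rewrite eq_sym snd_neq.
by rewrite /= eqxx -C2 eq_sym (negbTE (E_fst HE)).
Qed.

Lemma pnum1_E i j l : two i -> pnum r i j l = 1%N -> E i l.
Proof.
move=> Hi; rewrite pnum_fst (card_cell2 _ Hi (fstP i) (sndA Hi)); last by rewrite eq_sym snd_neq.
move=> H; apply: (EP (fstP i) (sndA Hi) (fstP l) (fstP l)).
apply/eqP => Heq; move: H => /=; rewrite Heq; by case: (_ == j).
Qed.

Lemma badP u v : bad_pair r u v <-> sim u v && ~~ E u v.
Proof.
split.
  case=> a [i [j [l [Ha1 [Hi0 Hla] Hall Hlink Hcard]]]].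
  have [Vi0 _ _] := Hall 0%N isT.
  have Hu : two u by rewrite -Hi0 /two -valencyE Vi0.
  have HE b : (b <= a)%N -> E (i b) (l b).
    move=> Hb; have [V1 _ P1] := Hall b Hb.
    by apply: (pnum1_E _ P1); rewrite /two -valencyE V1.
  have Hc b : (b <= a)%N -> connect E u (l b).
    elim: b => [|b IH] Hb.
      by rewrite -Hi0; apply: connect1; apply: HE.
    apply: connect_trans (IH (ltnW Hb)) _.
    by rewrite Hlink //; apply: connect1; apply: HE.
  rewrite /sim Hu -Hla Hc //=.
  by move: Hcard; rewrite cprod_card Hla; case: (E u v).
case/andP => /andP [Hu /connectP [p Hp Hv]] HnE.
have Hp0 : p != [::].
  by apply: contraNneq HnE => Hp0; rewrite Hv Hp0 /= Eaa.
pose q := u :: u :: p.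
exists (size p), (fun k => nth u q k), (fun k => r (fst (nth u q k)) (fst (nth u q k.+1))),
  (fun k => nth u q k.+1).
split => //.
- by case: p Hp0 {Hp Hv q}.
- split => //=; rewrite Hv.
  by have := nth_last u (u :: p).
- move=> b Hb.
  have HE : E (nth u q b) (nth u q b.+1).
    case: b Hb => [|b] Hb; first by rewrite /q /= Eaa.
    by rewrite /q /=; apply: (pathP u Hp).
  have /andP [H1 H2] := E_two HE.
  by rewrite !valencyE (eqP H1) (eqP H2) E_pnum.
- by rewrite cprod_card (negbTE HnE).
Qed.

Variable T : {vspace 'M[F]_#|X|}.
Hypothesis HT : is_terwilliger_algebra r x T.

Lemma T_mul u v : u \in T -> v \in T -> u *m v \in T.
Proof. by case: HT => [[_ H] _ _ _]; apply: H. Qed.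

Lemma adjA_T a : @adjA X d r F a \in T.
Proof. by case: HT. Qed.

Lemma dualE_T a : @dualE X d r F x a \in T.
Proof. by case: HT. Qed.

Lemma J_in a b : Jm a b \in T.
Proof.
have -> : Jm a b = \sum_c (@dualE X d r F x a *m @adjA X d r F c *m @dualE X d r F x b).
  rewrite !dualE_mx.
  under eq_bigr do rewrite adjA_mx mx_dualL mx_dualR.
  rewrite mx_sum; apply: mxP => y z.
  rewrite -mulr_suml -mulr_sumr /adjf.
  rewrite (bigD1 (r y z)) //= eqxx big1 ?addr0 ?mulr1.
    by rewrite -natrM mulnb.
  by move=> c /negbTE Hc; rewrite eq_sym Hc.
apply: memv_suml => c _; apply: T_mul; [apply: T_mul|]; 
  by rewrite ?adjA_T ?dualE_T.
Qed.

Lemma Gm_sim_in a b : sim a b -> Gm (a, b, false) \in T.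
Proof.
case/andP => Ha /connectP [p Hp ->].
suff H : forall c, sim a c -> Gm (a, c, false) \in T -> path E c p ->
    Gm (a, last c p, false) \in T.
  by apply: H => //; [exact: sim_refl | rewrite Gm_base ?dualE_T].
clear Hp; elim: p => [|b' p IH] c Hac HG /=; first by [].
case/andP => Hcb Hp; apply: IH Hp.
  exact: sim_trans Hac (E_sim Hcb).
rewrite (Gm_step Hac Hcb); apply: T_mul HG _.
by apply: T_mul; [apply: T_mul|]; rewrite ?adjA_T ?dualE_T.
Qed.

Lemma Gm_in i : Pp i -> Gm i \in T.
Proof.
case: i => [[a b] t]; rewrite /Pp /=.
case: (boolP (sim a b)) => Hab; last first.
  by rewrite orbF; case: t => //= _; rewrite Gm_nsim ?J_in.
case: t => _; last exact: Gm_sim_in.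
have -> : Gm (a, b, true) = Jm a b - Gm (a, b, false) by rewrite J_split addrAC subrr add0r.
by apply: memvB; [exact: J_in|exact: Gm_sim_in].
Qed.

Lemma T_eq : T = <<sq>>%VS.
Proof.
apply: subv_anti; apply/andP; split.
  by case: HT => _ _ _ H; apply: H; [exact: sq_subalg|exact: adjA_in|exact: dualE_in].
apply/span_subvP => M /mapP [i Hi ->]; apply: Gm_in.
by rewrite mem_enum in Hi.
Qed.

Lemma dimT : \dim T = #|Pp|.
Proof. by rewrite T_eq dim_sq. Qed.


Lemma card_Pp : #|Pp| = (d.+1 ^ 2 + #|[set ab : 'I_d.+1 * 'I_d.+1 | sim ab.1 ab.2]|)%N.
Proof.
have -> : #|Pp| = #|setX [set: 'I_d.+1 * 'I_d.+1] [set false] :|: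
                    setX [set ab : 'I_d.+1 * 'I_d.+1 | sim ab.1 ab.2] [set true]|.
  apply: eq_card => [[[a b] t]]; rewrite !in_setU !in_setX !inE /Pp /=.
  by case: t; rewrite ?orbF ?andbT ?andbF.
rewrite cardsU (_ : _ :&: _ = set0) ?cards0 ?subn0.
  by rewrite !cardsX cardsT card_prod card_ord !cards1 !muln1 mulnn.
apply/setP => [[ab t]]; rewrite !inE.
by case: t; rewrite ?andbF.
Qed.

Lemma main (B : {set 'I_d.+1 * 'I_d.+1}) :
  (forall ce : 'I_d.+1 * 'I_d.+1, ce \in B <-> bad_pair r ce.1 ce.2) ->
  \dim T = (d.+1 ^ 2
            + #|[set ab : 'I_d.+1 * 'I_d.+1 | #|cprod r (trI r ab.1) ab.2| == 2]|
            + #|B|)%N.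
Proof.
move=> HB.
rewrite dimT card_Pp -addnA; congr (_ + _)%N.
have -> : [set ab : 'I_d.+1 * 'I_d.+1 | #|cprod r (trI r ab.1) ab.2| == 2] =
          [set ab | E ab.1 ab.2].
  by apply/setP => ab; rewrite !inE cprod_card eqSS; case: (E _ _).
have -> : B = [set ab | sim ab.1 ab.2 && ~~ E ab.1 ab.2].
  apply/setP => ab; rewrite inE; apply/idP/idP => H.
    by apply/badP; apply/HB.
  by apply/HB; apply/badP.
have -> : [set ab : 'I_d.+1 * 'I_d.+1 | sim ab.1 ab.2] =
          [set ab | E ab.1 ab.2] :|: [set ab | sim ab.1 ab.2 && ~~ E ab.1 ab.2].
  apply/setP => ab; rewrite !inE.
  by case: (boolP (E ab.1 ab.2)) => HE /=; [rewrite (E_sim HE)|rewrite andbT].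
rewrite cardsU (_ : _ :&: _ = set0) ?cards0 ?subn0 //.
by apply/setP => ab; rewrite !inE; case: (E _ _); rewrite ?andbF.
Qed.

End QT.

Theorem theoremA (X : finType) (d : nat) (r : X -> X -> 'I_d.+1)
  (F : fieldType) (x : X) (T : {vspace 'M[F]_#|X|})
  (B : {set 'I_d.+1 * 'I_d.+1}) :
  is_scheme r -> quasi_thin r ->
  is_terwilliger_algebra r x T ->
  (forall ce : 'I_d.+1 * 'I_d.+1, ce \in B <-> bad_pair r ce.1 ce.2) ->
  \dim T = (d.+1 ^ 2
            + #|[set ab : 'I_d.+1 * 'I_d.+1 | #|cprod r (trI r ab.1) ab.2| == 2]|
            + #|B|)%N.
Proof.
move=> Hs Hq HT HB.
exact: (main Hs Hq HT HB).
Qed.
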